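(* The continued fraction \[ 80-\cfrac{64}{17+\cfrac{3^4}{32+\cfrac{5^4}{48+\cfrac{7^4}{64+\cdots}}}}, \] i.e. with $a(0)=80$, $a(1)=17$, $a(n)=16n$ for $n\ge2$, $b(0)=-64$, $b(n)=(2n+1)^4$ for $n\ge1$, converges to $\left(\Gamma(1/4)/\Gamma(3/4)\right)^4$.
   Context: The value of the continued fraction with partial denominators $a(n)$ and partial numerators $b(n)$ is $a(0)+\cfrac{b(0)}{a(1)+\cfrac{b(1)}{a(2)+\cdots}}$. *)

(* Defs.v *)
From Stdlib Require Import Reals.
From Coquelicot Require Import Coquelicot.
Open Scope R_scope.

Fixpoint cf_tail (a b : nat -> R) (k m : nat) : R :=
  match m with
  | O => a k
  | S m' => a k + b k / cf_tail a b (S k) m'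
  end.

(* n-th approximant: a(0) + b(0)/(a(1) + ... + b(n-1)/a(n)) *)
Definition cf_approx (a b : nat -> R) (n : nat) : R := cf_tail a b 0 n.

Definition cf_converges_to (a b : nat -> R) (l : R) : Prop :=
  is_lim_seq (cf_approx a b) l.

Definition Gamma (x : R) : R :=
  RInt_gen (fun t => Rpower t (x - 1) * exp (- t)) (at_right 0) (Rbar_locally p_infty).

Definition cf_a (n : nat) : R :=
  match n with
  | O => 80
  | 1%nat => 17
  | _ => 16 * INR n
  end.

Definition cf_b (n : nat) : R :=
  match n with
  | O => -64
  | _ => (2 * INR n + 1) ^ 4
  end.

(* Main.v *)
Require Import Defs.
From Stdlib Require Import Reals Lra Lia ZArith.
From Coquelicot Require Import Coquelicot.
Open Scope R_scope.



Lemma ball_R (y e x : R) : Rabs (x - y) < e -> ball y e x.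
Proof. intros H. unfold ball; simpl; unfold AbsRing_ball, abs, minus, plus, opp; simpl. exact H. Qed.

Lemma mono_lim_right (g : R -> R) (B : R) :
  (forall a b, 0 < a <= b -> b <= 1 -> g b <= g a) ->
  (forall a, 0 < a <= 1 -> g a <= B) ->
  exists L, filterlim g (at_right 0) (locally L) /\ (forall a, 0 < a <= 1 -> g a <= L).
Proof.
  intros Hm Hb.
  set (E := fun y => exists a, 0 < a <= 1 /\ y = g a).
  assert (HE : bound E). { exists B. intros y [a [Ha ->]]. now apply Hb. }
  assert (HE1 : exists y, E y). { exists (g 1). exists 1. split; [lra|reflexivity]. }
  destruct (completeness E HE HE1) as [L [HL1 HL2]].
  exists L. split.
  - apply filterlim_locally. intros eps.
    assert (Hex : exists a0, 0 < a0 <= 1 /\ L - eps < g a0).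
    { apply Classical_Prop.NNPP. intros Hn.
      assert (L <= L - eps). { apply HL2. intros y [a [Ha ->]].
        destruct (Rle_or_lt (g a) (L - eps)); auto. exfalso; apply Hn; exists a; auto. }
      destruct eps; simpl in *; lra. }
    destruct Hex as [a0 [Ha0 Hg0]].
    exists (mkposreal a0 (proj1 Ha0)). intros a Hab Ha. apply ball_R.
    assert (Ha' : a < a0).
    { unfold ball in Hab; simpl in Hab; unfold AbsRing_ball, abs, minus, plus, opp in Hab; simpl in Hab.
      apply Rabs_lt_between in Hab. lra. }
    assert (g a0 <= g a) by (apply Hm; lra).
    assert (g a <= L) by (apply HL1; exists a; split; [lra|reflexivity]).
    apply Rabs_lt_between; lra.
  - intros a Ha. apply HL1. exists a; auto.
Qed.

Lemma mono_lim_pinf (g : R -> R) (B : R) :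
  (forall a b, 1 <= a <= b -> g a <= g b) ->
  (forall a, 1 <= a -> g a <= B) ->
  exists L, filterlim g (Rbar_locally p_infty) (locally L) /\ (forall a, 1 <= a -> g a <= L).
Proof.
  intros Hm Hb.
  set (E := fun y => exists a, 1 <= a /\ y = g a).
  assert (HE : bound E). { exists B. intros y [a [Ha ->]]. now apply Hb. }
  assert (HE1 : exists y, E y). { exists (g 1). exists 1. split; [lra|reflexivity]. }
  destruct (completeness E HE HE1) as [L [HL1 HL2]].
  exists L. split.
  - apply filterlim_locally. intros eps.
    assert (Hex : exists a0, 1 <= a0 /\ L - eps < g a0).
    { apply Classical_Prop.NNPP. intros Hn.
      assert (L <= L - eps). { apply HL2. intros y [a [Ha ->]].
        destruct (Rle_or_lt (g a) (L - eps)); auto. exfalso; apply Hn; exists a; auto. }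
      destruct eps; simpl in *; lra. }
    destruct Hex as [a0 [Ha0 Hg0]].
    exists a0. intros a Ha. apply ball_R.
    assert (g a0 <= g a) by (apply Hm; lra).
    assert (g a <= L) by (apply HL1; exists a; split; [lra|reflexivity]).
    apply Rabs_lt_between; lra.
  - intros a Ha. apply HL1. exists a; auto.
Qed.

Definition gf (x t : R) := Rpower t (x - 1) * exp (- t).

Lemma nat_above x : exists k : nat, x <= INR k.
Proof.
  destruct (archimed x) as [H _]. destruct (Z_le_gt_dec 0 (up x)) as [h|h].
  - exists (Z.to_nat (up x)). rewrite INR_IZR_INZ, Z2Nat.id; [lra|lia].
  - exists 0%nat. apply Z.gt_lt in h. apply IZR_lt in h. simpl. lra.
Qed.

Lemma Rpower_pos t y : 0 < Rpower t y.
Proof. unfold Rpower; apply exp_pos. Qed.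

Lemma gf_pos x t : 0 < gf x t.
Proof. unfold gf. apply Rmult_lt_0_compat; [apply Rpower_pos|apply exp_pos]. Qed.

Lemma Rpower_ex_derive t y : 0 < t -> ex_derive (fun s => Rpower s y) t.
Proof. intros Ht. exists (y * Rpower t (y - 1)). apply is_derive_Reals. now apply derivable_pt_lim_power. Qed.

Lemma gf_cont x t : 0 < t -> continuous (gf x) t.
Proof.
  intros Ht. apply (ex_derive_continuous (gf x)). unfold gf.
  apply ex_derive_mult; [now apply Rpower_ex_derive|]. auto_derive. auto.
Qed.

Lemma Rpower_cont t y : 0 < t -> continuous (fun s => Rpower s y) t.
Proof. intros Ht. apply (ex_derive_continuous (fun s => Rpower s y)). now apply Rpower_ex_derive. Qed.

Lemma gf_ex x a b : 0 < a -> 0 < b -> ex_RInt (gf x) a b.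
Proof.
  intros Ha Hb. apply (ex_RInt_continuous (V:=R_CompleteNormedModule)). intros z Hz. apply gf_cont.
  destruct Hz as [Hz _]. apply Rlt_le_trans with (2 := Hz).
  unfold Rmin; destruct Rle_dec; lra.
Qed.

Lemma gf_left_bound x a : 0 < x -> 0 < a <= 1 -> RInt (gf x) a 1 <= / x.
Proof.
  intros Hx Ha.
  assert (HI : is_RInt (fun t => Rpower t (x - 1)) a 1
                (minus ((fun t => Rpower t x / x) 1) ((fun t => Rpower t x / x) a))).
  { apply (is_RInt_derive (V:=R_CompleteNormedModule) (fun t => Rpower t x / x)).
    - intros z Hz. assert (0 < z).
      { destruct Hz as [Hz _]. apply Rlt_le_trans with (2 := Hz). unfold Rmin; destruct Rle_dec; lra. }
      apply (is_derive_ext (fun t => / x * Rpower t x)). { intros t; change (/ x * Rpower t x = Rpower t x / x); unfold Rdiv; ring. }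
      apply is_derive_Reals.
      replace (Rpower z (x - 1)) with (/ x * (x * Rpower z (x - 1))) by (field; lra).
      exact (derivable_pt_lim_scal (fun t => Rpower t x) (/ x) z _ (derivable_pt_lim_power z x H)).
    - intros z Hz. assert (0 < z).
      { destruct Hz as [Hz _]. apply Rlt_le_trans with (2 := Hz). unfold Rmin; destruct Rle_dec; lra. }
      now apply Rpower_cont. }
  apply Rle_trans with (RInt (fun t => Rpower t (x - 1)) a 1).
  - apply RInt_le; [lra| apply gf_ex; lra | eexists; exact HI |].
    intros t Ht. unfold gf. rewrite <- (Rmult_1_r (Rpower t (x-1))) at 2.
    apply Rmult_le_compat_l; [left; apply Rpower_pos|].
    rewrite <- exp_0. apply exp_le_3 || (left; apply exp_increasing; lra).
  - rewrite (is_RInt_unique _ _ _ _ HI). unfold minus, plus, opp; simpl.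
    unfold Rpower at 1. rewrite ln_1, Rmult_0_r, exp_0.
    assert (0 < Rpower a x) by apply Rpower_pos.
    apply Rle_trans with (1 / x - 0). 2: lra.
    unfold Rdiv. assert (0 < / x) by (apply Rinv_0_lt_compat; lra). nra.
Qed.

Lemma exp_pow_n t n : exp t = exp (t / INR (S n)) ^ (S n).
Proof.
  rewrite <- Rpower_pow by apply exp_pos. unfold Rpower. rewrite ln_exp.
  f_equal. field. apply not_0_INR. lia.
Qed.

Lemma gf_right_pt x k t : x - 1 <= INR k -> 1 <= t ->
  gf x t <= INR (S (S k)) ^ (S (S k)) / t ^ 2.
Proof.
  intros Hk Ht. set (n := S (S k)). unfold gf.
  assert (Hn : 0 < INR n) by (apply lt_0_INR; unfold n; lia).
  assert (H1 : Rpower t (x - 1) <= t ^ k).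
  { rewrite <- Rpower_pow by lra. apply Rle_Rpower; lra. }
  assert (H2 : (t / INR n) ^ n <= exp t).
  { unfold n at 2. rewrite (exp_pow_n t (S k)). fold n. apply pow_incr. split.
    - unfold Rdiv; apply Rmult_le_pos; [lra|left; apply Rinv_0_lt_compat; lra].
    - pose proof (exp_ineq1_le (t / INR n)).
      assert (0 <= t / INR n) by (unfold Rdiv; apply Rmult_le_pos; [lra|left; apply Rinv_0_lt_compat; lra]).
      lra. }
  assert (H3 : 0 < (t / INR n) ^ n) by (apply pow_lt; unfold Rdiv; apply Rmult_lt_0_compat; [lra| apply Rinv_0_lt_compat; lra]).
  rewrite exp_Ropp.
  apply Rle_trans with (t ^ k * / (t / INR n) ^ n).
  - apply Rmult_le_compat; [left; apply Rpower_pos | left; apply Rinv_0_lt_compat, exp_pos | exact H1 |].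
    apply Rinv_le_contravar; assumption.
  - right. set (m := INR n). replace n with (k + 2)%nat by (unfold n; lia).
    unfold Rdiv. rewrite Rpow_mult_distr, pow_inv, pow_add.
    field. split; [lra|split; apply pow_nonzero; unfold m; lra].
Qed.

Lemma gf_right_bound x k b : x - 1 <= INR k -> 1 <= b ->
  RInt (gf x) 1 b <= INR (S (S k)) ^ (S (S k)).
Proof.
  intros Hk Hb. set (C := INR (S (S k)) ^ (S (S k))).
  assert (HC : 0 < C) by (apply pow_lt; apply lt_0_INR; lia).
  assert (HI : is_RInt (fun t => C / t ^ 2) 1 b (minus ((fun t => - C / t) b) ((fun t => - C / t) 1))).
  { apply (is_RInt_derive (V:=R_CompleteNormedModule) (fun t => - C / t)).
    - intros z Hz. assert (1 <= z).
      { destruct Hz as [Hz _]. apply Rle_trans with (2 := Hz). unfold Rmin; destruct Rle_dec; lra. }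
      auto_derive. lra. field. lra.
    - intros z Hz. assert (1 <= z).
      { destruct Hz as [Hz _]. apply Rle_trans with (2 := Hz). unfold Rmin; destruct Rle_dec; lra. }
      apply (ex_derive_continuous (fun t => C / t ^ 2)). auto_derive. rewrite Rmult_1_r. apply Rgt_not_eq. nra. }
  apply Rle_trans with (RInt (fun t => C / t ^ 2) 1 b).
  - apply RInt_le; [lra| apply gf_ex; lra | eexists; exact HI |].
    intros t Ht. apply gf_right_pt; lra.
  - rewrite (is_RInt_unique _ _ _ _ HI). unfold minus, plus, opp; simpl.
    assert (0 < C / b) by (apply Rdiv_lt_0_compat; lra).
    replace (- C / b + - (- C / 1)) with (C - C / b) by (field; lra). lra.
Qed.

Lemma RInt_gen_left (f : R -> R) (L : R) :
  (forall a b, 0 < a -> 0 < b -> ex_RInt f a b) ->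
  filterlim (fun a => RInt f a 1) (at_right 0) (locally L) ->
  is_RInt_gen f (at_right 0) (at_point 1) L.
Proof.
  intros Hex Hl. unfold is_RInt_gen.
  apply filterlimi_lim_ext_loc with (f := fun ab => RInt f (fst ab) (snd ab)).
  - exists (fun a => 0 < a) (fun b => b = 1).
    + exists (mkposreal 1 Rlt_0_1). intros y _ Hy. exact Hy.
    + reflexivity.
    + intros a b Ha Hb. simpl. apply (RInt_correct (V:=R_CompleteNormedModule)). apply Hex; lra.
  - intros P HP. destruct (Hl P HP) as [eps Heps].
    exists (fun a => ball 0 eps a /\ 0 < a) (fun b => b = 1).
    + exists eps. intros y Hy Hy'. split; auto.
    + reflexivity.
    + intros a b [Ha Ha'] ->. simpl. apply Heps; auto.
Qed.

Lemma RInt_gen_right (f : R -> R) (L : R) :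
  (forall a b, 0 < a -> 0 < b -> ex_RInt f a b) ->
  filterlim (fun b => RInt f 1 b) (Rbar_locally p_infty) (locally L) ->
  is_RInt_gen f (at_point 1) (Rbar_locally p_infty) L.
Proof.
  intros Hex Hl. unfold is_RInt_gen.
  apply filterlimi_lim_ext_loc with (f := fun ab => RInt f (fst ab) (snd ab)).
  - exists (fun a => a = 1) (fun b => 0 < b).
    + reflexivity.
    + exists 0. intros y Hy. exact Hy.
    + intros a b Ha Hb. simpl. apply (RInt_correct (V:=R_CompleteNormedModule)). apply Hex; lra.
  - intros P HP. destruct (Hl P HP) as [M HM].
    exists (fun a => a = 1) (fun b => M < b).
    + reflexivity.
    + exists M. auto.
    + intros a b -> Hb. simpl. apply HM; auto.
Qed.

Lemma gamma_exists x : 0 < x ->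
  exists L, 0 < L /\ is_RInt_gen (gf x) (at_right 0) (Rbar_locally p_infty) L.
Proof.
  intros Hx.
  assert (Hex : forall a b, 0 < a -> 0 < b -> ex_RInt (gf x) a b) by (intros; apply gf_ex; auto).
  assert (Hnn : forall a b, 0 < a <= b -> 0 <= RInt (gf x) a b).
  { intros a b Hab. apply RInt_ge_0; [lra|apply gf_ex; lra|]. intros t Ht; left; apply gf_pos. }
  destruct (mono_lim_right (fun a => RInt (gf x) a 1) (/ x)) as [L0 [HL0 HL0b]].
  { intros a b Hab Hb. rewrite <- (RInt_Chasles (gf x) a b 1) by (apply gf_ex; lra).
    pose proof (Hnn a b Hab). unfold plus; simpl. lra. }
  { intros a Ha. apply gf_left_bound; auto. }
  destruct (nat_above (x - 1)) as [k Hk].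
  destruct (mono_lim_pinf (fun b => RInt (gf x) 1 b) (INR (S (S k)) ^ (S (S k)))) as [L1 [HL1 HL1b]].
  { intros a b Hab. rewrite <- (RInt_Chasles (gf x) 1 a b) by (apply gf_ex; lra).
    pose proof (Hnn a b ltac:(lra)). unfold plus; simpl. lra. }
  { intros b Hb. apply gf_right_bound; auto. }
  exists (L0 + L1). split.
  - assert (0 <= L0). { apply Rle_trans with (RInt (gf x) 1 1). rewrite RInt_point; unfold zero; simpl; lra. apply HL0b; lra. }
    assert (0 < L1).
    { apply Rlt_le_trans with (RInt (gf x) 1 2); [|apply HL1b; lra].
      apply RInt_gt_0; [lra| intros; apply gf_pos | intros; apply gf_cont; lra]. }
    lra.
  - apply (is_RInt_gen_Chasles (gf x) 1 L0 L1).
    + now apply RInt_gen_left.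
    + now apply RInt_gen_right.
Qed.


Definition hf (x t : R) := Rpower t x * exp (- t).

Lemma Rpower_m1 t x : 0 < t -> Rpower t (x - 1) = Rpower t x / t.
Proof.
  intros Ht. unfold Rpower. replace ((x - 1) * ln t) with (x * ln t + - ln t) by ring.
  rewrite exp_plus, exp_Ropp, exp_ln by auto. reflexivity.
Qed.

Lemma hf_derive x t : 0 < t -> is_derive (hf x) t (x * gf x t - gf (x + 1) t).
Proof.
  intros Ht. unfold hf, gf, Rpower. auto_derive; auto.
  replace (x + 1 - 1) with x by ring.
  fold (Rpower t x). fold (Rpower t (x - 1)). rewrite Rpower_m1 by auto.
  field. lra.
Qed.

Lemma hf_pos x t : 0 < hf x t.
Proof. unfold hf. apply Rmult_lt_0_compat; [apply Rpower_pos|apply exp_pos]. Qed.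

Lemma hf_lim0 x : 0 < x -> filterlim (hf x) (at_right 0) (locally 0).
Proof.
  intros Hx. apply filterlim_locally. intros eps.
  assert (He : 0 < Rpower eps (/ x)) by apply Rpower_pos.
  exists (mkposreal _ He). intros t Ht Ht0. apply ball_R.
  assert (Ht' : t < Rpower eps (/ x)).
  { unfold ball in Ht; simpl in Ht; unfold AbsRing_ball, abs, minus, plus, opp in Ht; simpl in Ht.
    apply Rabs_lt_between in Ht. lra. }
  assert (H1 : Rpower t x < eps).
  { replace (pos eps) with (Rpower (Rpower eps (/ x)) x).
    - apply Rlt_Rpower_l; lra.
    - rewrite Rpower_mult. replace (/ x * x) with 1 by (field; lra).
      apply Rpower_1. destruct eps; auto. }
  pose proof (hf_pos x t).
  assert (hf x t <= Rpower t x).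
  { unfold hf. rewrite <- (Rmult_1_r (Rpower t x)) at 2.
    apply Rmult_le_compat_l; [left; apply Rpower_pos|].
    rewrite <- exp_0. left; apply exp_increasing; lra. }
  rewrite Rminus_0_r, Rabs_pos_eq; lra.
Qed.

Lemma hf_liminf x : 0 < x -> filterlim (hf x) (Rbar_locally p_infty) (locally 0).
Proof.
  intros Hx. destruct (nat_above x) as [k Hk].
  set (C := INR (S (S k)) ^ (S (S k))).
  assert (HC : 0 < C) by (apply pow_lt; apply lt_0_INR; lia).
  apply filterlim_locally. intros eps.
  exists (Rmax 1 (C / eps)). intros t Ht. apply ball_R.
  assert (H1 : 1 < t) by (pose proof (Rmax_l 1 (C / eps)); lra).
  assert (H2 : C / eps < t) by (pose proof (Rmax_r 1 (C / eps)); lra).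
  assert (H3 : hf x t <= C / t ^ 2).
  { replace (hf x t) with (gf (x + 1) t).
    - apply gf_right_pt; lra.
    - unfold gf, hf. f_equal. f_equal. ring. }
  pose proof (hf_pos x t).
  assert (C / t ^ 2 < eps).
  { destruct eps as [e He]; simpl in *.
    apply Rmult_lt_reg_r with (t ^ 2). apply pow_lt; lra.
    unfold Rdiv. rewrite Rmult_assoc, Rinv_l by (apply pow_nonzero; lra). rewrite Rmult_1_r.
    apply (Rmult_lt_compat_r e) in H2; auto. unfold Rdiv in H2.
    rewrite Rmult_assoc, Rinv_l, Rmult_1_r in H2 by lra. simpl. nra. }
  rewrite Rminus_0_r, Rabs_pos_eq; lra.
Qed.

Lemma min_pos a b z : 0 < a -> 0 < b -> Rmin a b <= z -> 0 < z.
Proof. intros. unfold Rmin in *; destruct Rle_dec; lra. Qed.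

Lemma gamma_rec x L L' : 0 < x ->
  is_RInt_gen (gf x) (at_right 0) (Rbar_locally p_infty) L ->
  is_RInt_gen (gf (x + 1)) (at_right 0) (Rbar_locally p_infty) L' ->
  L' = x * L.
Proof.
  intros Hx HL HL'.
  assert (Hpos : filter_prod (at_right 0) (Rbar_locally p_infty) (fun ab => 0 < fst ab /\ 0 < snd ab)).
  { exists (fun a => 0 < a) (fun b => 0 < b).
    - exists (mkposreal 1 Rlt_0_1). intros y _ Hy. exact Hy.
    - exists 0. auto.
    - intros a b Ha Hb; simpl; auto. }
  assert (HD : is_RInt_gen (Derive (hf x)) (at_right 0) (Rbar_locally p_infty) (0 - 0)).
  { apply is_RInt_gen_Derive.
    - eapply filter_imp; [|exact Hpos]. intros [a b] [Ha Hb] z [Hz _]. simpl in *.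
      eexists. apply hf_derive. apply (min_pos a b z Ha Hb Hz).
    - eapply filter_imp; [|exact Hpos]. intros [a b] [Ha Hb] z [Hz _]. simpl in *.
      assert (Hz0 : 0 < z) by (apply (min_pos a b z Ha Hb Hz)).
      apply continuous_ext_loc with (g := fun y => x * gf x y - gf (x + 1) y).
      + exists (mkposreal z Hz0). intros y Hy. simpl in Hy.
        unfold ball in Hy; simpl in Hy; unfold AbsRing_ball, abs, minus, plus, opp in Hy; simpl in Hy.
        apply Rabs_lt_between in Hy.
        symmetry. apply is_derive_unique. apply hf_derive. lra.
      + apply (continuous_minus (fun y => x * gf x y) (gf (x + 1))).
        * apply (continuous_scal_r x (gf x)). apply gf_cont; auto.
        * apply gf_cont; auto.
    - now apply hf_lim0.
    - now apply hf_liminf. }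
  apply (is_RInt_gen_ext _ (fun y => minus (scal x (gf x y)) (gf (x + 1) y))) in HD.
  2: { eapply filter_imp; [|exact Hpos]. intros [a b] [Ha Hb] z [Hz _]. simpl in *.
       apply is_derive_unique. apply hf_derive. apply (min_pos a b z Ha Hb (Rlt_le _ _ Hz)). }
  pose proof (is_RInt_gen_minus _ _ _ _ (is_RInt_gen_scal _ x _ HL) HL') as HM.
  apply (is_RInt_gen_unique (V:=R_CompleteNormedModule)) in HD. apply (is_RInt_gen_unique (V:=R_CompleteNormedModule)) in HM.
  pose proof (eq_trans (eq_sym HD) HM) as E.
  unfold minus, plus, opp, scal in E; simpl in E.
  unfold mult in E; simpl in E. lra.
Qed.

Lemma gf_half_pt x t : 0 < x -> 0 < t ->
  gf (x + /2) t <= sqrt x / 2 * gf x t + / (2 * sqrt x) * gf (x + 1) t.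
Proof.
  intros Hx Ht. unfold gf.
  set (s := Rpower t (/ 2)). set (A := Rpower t (x - 1)). set (e := exp (- t)).
  assert (E1 : Rpower t (x + / 2 - 1) = A * s).
  { unfold A, s. rewrite <- Rpower_plus. f_equal. ring. }
  assert (E2 : Rpower t (x + 1 - 1) = A * (s * s)).
  { unfold A, s. rewrite <- !Rpower_plus. f_equal. field. }
  rewrite E1, E2.
  assert (HA : 0 < A) by apply Rpower_pos. assert (He : 0 < e) by apply exp_pos.
  assert (Hl : 0 < sqrt x) by (apply sqrt_lt_R0; lra).
  set (l := sqrt x) in *.
  assert (0 <= A * e * (l - s) ^ 2 / (2 * l)).
  { apply Rmult_le_pos. apply Rmult_le_pos. nra. apply pow2_ge_0. left; apply Rinv_0_lt_compat; lra. }
  apply Rminus_le. replace (A * s * e - (l / 2 * (A * e) + / (2 * l) * (A * (s * s) * e)))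
    with (- (A * e * (l - s) ^ 2 / (2 * l))) by (field; lra). lra.
Qed.

Lemma gamma_half x L L2 : 0 < x ->
  is_RInt_gen (gf x) (at_right 0) (Rbar_locally p_infty) L ->
  is_RInt_gen (gf (x + /2)) (at_right 0) (Rbar_locally p_infty) L2 ->
  is_RInt_gen (gf (x + 1)) (at_right 0) (Rbar_locally p_infty) (x * L) ->
  L2 <= sqrt x * L.
Proof.
  intros Hx HL HL2 HL1.
  assert (Hl : 0 < sqrt x) by (apply sqrt_lt_R0; lra).
  pose proof (is_RInt_gen_plus _ _ _ _ (is_RInt_gen_scal _ (sqrt x / 2) _ HL)
                (is_RInt_gen_scal _ (/ (2 * sqrt x)) _ HL1)) as HG.
  assert (F1 : filter_prod (at_right 0) (Rbar_locally p_infty) (fun ab : R * R => fst ab <= snd ab)).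
  { exists (fun a => 0 < a < 1) (fun b => 1 < b).
    - exists (mkposreal 1 Rlt_0_1); intros y Hy Hy0.
      unfold ball in Hy; simpl in Hy; unfold AbsRing_ball, abs, minus, plus, opp in Hy; simpl in Hy.
      apply Rabs_lt_between in Hy; lra.
    - exists 1; auto.
    - intros a b Ha Hb; simpl; lra. }
  assert (F2 : filter_prod (at_right 0) (Rbar_locally p_infty) (fun ab : R * R =>
     forall t : R, fst ab <= t <= snd ab -> norm (gf (x + /2) t) <=
       plus (scal (sqrt x / 2) (gf x t)) (scal (/ (2 * sqrt x)) (gf (x + 1) t)))).
  { exists (fun a => 0 < a) (fun b => 0 < b).
    - exists (mkposreal 1 Rlt_0_1); intros y _ Hy0; exact Hy0.
    - exists 0; auto.
    - intros a b Ha Hb t Ht; simpl in *.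
      unfold norm; simpl; unfold abs; simpl.
      rewrite Rabs_pos_eq by (left; apply gf_pos).
      unfold plus, scal; simpl; unfold mult; simpl.
      apply gf_half_pt; lra. }
  pose proof (RInt_gen_norm (V:=R_CompleteNormedModule) (gf (x + /2)) _ L2 _ F1 F2 HL2 HG) as H.
  unfold norm in H; simpl in H; unfold abs in H; simpl in H.
  unfold plus, scal in H; simpl in H; unfold mult in H; simpl in H.
  apply Rle_trans with (1 := Rle_abs _). eapply Rle_trans; [exact H|].
  right. assert (Hs : sqrt x * sqrt x = x) by (apply sqrt_sqrt; lra). replace (x * L) with (sqrt x * sqrt x * L) by (rewrite Hs; ring). field. lra.
Qed.


Lemma Gamma_spec x : 0 < x ->
  0 < Gamma x /\ is_RInt_gen (gf x) (at_right 0) (Rbar_locally p_infty) (Gamma x).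
Proof.
  intros Hx. destruct (gamma_exists x Hx) as [L [HL HI]].
  assert (E : Gamma x = L).
  { unfold Gamma. change (RInt_gen (gf x) (at_right 0) (Rbar_locally p_infty) = L).
    now apply (is_RInt_gen_unique (V:=R_CompleteNormedModule)). }
  rewrite E; auto.
Qed.

Lemma Gamma_rec x : 0 < x -> Gamma (x + 1) = x * Gamma x.
Proof.
  intros Hx. apply (gamma_rec x); [auto|apply Gamma_spec; lra|apply Gamma_spec; lra].
Qed.

Lemma Gamma_half x : 0 < x -> Gamma (x + /2) <= sqrt x * Gamma x.
Proof.
  intros Hx. apply gamma_half; auto; try (apply Gamma_spec; lra).
  rewrite <- Gamma_rec by auto. apply Gamma_spec; lra.
Qed.

Fixpoint poch (x : R) (n : nat) : R :=
  match n with O => 1 | S n => poch x n * (x + INR n) end.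

Lemma Gamma_poch x m : 0 < x -> Gamma (x + INR m) = Gamma x * poch x m.
Proof.
  intros Hx. induction m as [|m IH].
  - simpl. rewrite Rplus_0_r; ring.
  - rewrite S_INR. replace (x + (INR m + 1)) with ((x + INR m) + 1) by ring.
    rewrite Gamma_rec by (pose proof (pos_INR m); lra). rewrite IH. simpl. ring.
Qed.

Lemma poch_pos x m : 0 < x -> 0 < poch x m.
Proof.
  intros Hx; induction m; simpl; [lra|]. apply Rmult_lt_0_compat; auto. pose proof (pos_INR m); lra.
Qed.

Definition rho := Gamma (/4) / Gamma (3/4).

Lemma u_bounds m :
  let u := Gamma (INR m + 3/4) / Gamma (INR m + /4) in
  (INR m + /4) / sqrt (INR m + 3/4) <= u <= sqrt (INR m + /4).
Proof.
  intros u. pose proof (pos_INR m) as Hm.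
  destruct (Gamma_spec (INR m + /4)) as [G1 _]; [lra|].
  destruct (Gamma_spec (INR m + 3/4)) as [G3 _]; [lra|].
  assert (Hs1 : 0 < sqrt (INR m + 3/4)) by (apply sqrt_lt_R0; lra).
  pose proof (Gamma_half (INR m + /4) ltac:(lra)) as H1.
  replace (INR m + / 4 + / 2) with (INR m + 3/4) in H1 by field.
  pose proof (Gamma_half (INR m + 3/4) ltac:(lra)) as H2.
  replace (INR m + 3/4 + / 2) with (INR m + /4 + 1) in H2 by field.
  rewrite Gamma_rec in H2 by lra.
  unfold u. split.
  - apply Rmult_le_reg_r with (sqrt (INR m + 3/4) * Gamma (INR m + /4)).
    apply Rmult_lt_0_compat; auto.
    replace ((INR m + / 4) / sqrt (INR m + 3 / 4) * (sqrt (INR m + 3 / 4) * Gamma (INR m + / 4)))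
      with ((INR m + /4) * Gamma (INR m + /4)) by (field; lra).
    replace (Gamma (INR m + 3 / 4) / Gamma (INR m + / 4) * (sqrt (INR m + 3 / 4) * Gamma (INR m + / 4)))
      with (sqrt (INR m + 3 / 4) * Gamma (INR m + 3 / 4)) by (field; lra).
    exact H2.
  - apply Rmult_le_reg_r with (Gamma (INR m + /4)); auto.
    replace (Gamma (INR m + 3 / 4) / Gamma (INR m + / 4) * Gamma (INR m + / 4))
      with (Gamma (INR m + 3 / 4)) by (field; lra).
    exact H1.
Qed.

Lemma ratio_poch m : poch (3/4) m / poch (/4) m = rho * (Gamma (INR m + 3/4) / Gamma (INR m + /4)).
Proof.
  destruct (Gamma_spec (/4)) as [G1 _]; [lra|].
  destruct (Gamma_spec (3/4)) as [G3 _]; [lra|].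
  pose proof (poch_pos (/4) m ltac:(lra)). pose proof (poch_pos (3/4) m ltac:(lra)).
  unfold rho. rewrite (Rplus_comm (INR m)), (Rplus_comm (INR m)).
  rewrite !Gamma_poch by lra. field. repeat split; lra.
Qed.


Fixpoint T (a b : nat -> R) (k m : nat) (x : R) : R :=
  match m with O => x | S m' => a k + b k / T a b (S k) m' x end.

Lemma cf_tail_T a b m : forall k, cf_tail a b k m = T a b k m (a (k + m)%nat).
Proof.
  induction m as [|m IH]; intros k; simpl.
  - now rewrite Nat.add_0_r.
  - rewrite IH. replace (S k + m)%nat with (k + S m)%nat by lia. reflexivity.
Qed.

Lemma T_back a b m : forall k x, T a b k (S m) x = T a b k m (a (k + m)%nat + b (k + m)%nat / x).
Proof.
  induction m as [|m IH]; intros k x.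
  - simpl. now rewrite Nat.add_0_r.
  - change (T a b k (S (S m)) x) with (a k + b k / T a b (S k) (S m) x).
    rewrite IH. simpl. replace (k + S m)%nat with (S (k + m)) by lia. reflexivity.
Qed.

Section Conv.
Variables (a b p q : nat -> R).
Hypotheses (p0 : p 0%nat = 1) (p1 : p 1%nat = a 0%nat) (q0 : q 0%nat = 0) (q1 : q 1%nat = 1)
  (prec : forall n, p (S (S n)) = a (S n) * p (S n) + b n * p n)
  (qrec : forall n, q (S (S n)) = a (S n) * q (S n) + b n * q n)
  (apos : forall n, 0 < a (S n)) (bpos : forall n, 0 < b (S n))
  (qpos : forall n, 0 < q (S n)) (bq : forall n, 0 <= b n * q n).

Lemma T_formula n : forall x, 0 < x ->
  T a b 0 (S n) x = (x * p (S n) + b n * p n) / (x * q (S n) + b n * q n).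
Proof.
  induction n as [|n IH]; intros x Hx.
  - simpl. rewrite p0, p1, q0, q1. field. lra.
  - rewrite T_back. simpl (0 + S n)%nat.
    set (y := a (S n) + b (S n) / x).
    assert (Hy : 0 < y).
    { unfold y. pose proof (apos n). pose proof (bpos n).
      assert (0 < b (S n) / x) by (apply Rdiv_lt_0_compat; auto). lra. }
    rewrite IH by auto.
    assert (D1 : 0 < y * q (S n) + b n * q n).
    { pose proof (qpos n). pose proof (bq n). nra. }
    assert (D2 : x * (y * q (S n) + b n * q n) = x * q (S (S n)) + b (S n) * q (S n)).
    { rewrite qrec. unfold y. field. lra. }
    assert (N2 : x * (y * p (S n) + b n * p n) = x * p (S (S n)) + b (S n) * p (S n)).
    { rewrite prec. unfold y. field. lra. }
    rewrite <- D2, <- N2. field. lra.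
Qed.

Lemma approx_formula n : cf_approx a b n = p (S n) / q (S n).
Proof.
  destruct n as [|n].
  - unfold cf_approx. simpl. rewrite p1, q1. field.
  - unfold cf_approx. rewrite cf_tail_T. simpl (0 + S n)%nat.
    rewrite T_formula by apply apos.
    rewrite prec, qrec. reflexivity.
Qed.
End Conv.

Fixpoint rpair (a b : nat -> R) (u0 u1 : R) (n : nat) : R * R :=
  match n with
  | O => (u0, u1)
  | S n' => let (u, v) := rpair a b u0 u1 n' in (v, a (S n') * v + b n' * u)
  end.

Definition rseq a b u0 u1 n := fst (rpair a b u0 u1 n).

Lemma rseq_rec a b u0 u1 n :
  rseq a b u0 u1 (S (S n)) = a (S n) * rseq a b u0 u1 (S n) + b n * rseq a b u0 u1 n.
Proof. unfold rseq. simpl. destruct (rpair a b u0 u1 n). reflexivity. Qed.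

Definition pp := rseq cf_a cf_b 1 80.
Definition qq := rseq cf_a cf_b 0 1.

Fixpoint Dp (m : nat) : R := match m with O => 1 | S m' => Dp m' * (4 * INR m' + 3) ^ 4 end.
Fixpoint Ep (m : nat) : R := match m with O => 1 | S m' => Ep m' * (4 * INR m' + 5) ^ 4 end.

Lemma Dp_S m : Dp (S m) = Dp m * (4 * INR m + 3) ^ 4.
Proof. reflexivity. Qed.
Lemma Ep_S m : Ep (S m) = Ep m * (4 * INR m + 5) ^ 4.
Proof. reflexivity. Qed.

Lemma Ep_pos m : 0 < Ep m.
Proof. induction m; [simpl; lra|]. rewrite Ep_S. apply Rmult_lt_0_compat; auto. apply pow_lt. pose proof (pos_INR m); lra. Qed.

Lemma cf_a_SS n : cf_a (S (S n)) = 16 * INR (S (S n)).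
Proof. reflexivity. Qed.
Lemma cf_b_S n : cf_b (S n) = (2 * INR (S n) + 1) ^ 4.
Proof. reflexivity. Qed.

Lemma pp_closed m :
  pp (S (2 * m)) = 16 * Dp m * ((4 * INR m + 2) ^ 2 + 1) /\ pp (S (S (2 * m))) = 16 * Dp (S m).
Proof.
  induction m as [|m [IH1 IH2]].
  - simpl. unfold pp, rseq. simpl. split; [|]; unfold cf_a, cf_b; simpl; ring.
  - assert (E1 : pp (S (2 * S m)) = 16 * Dp (S m) * ((4 * INR (S m) + 2) ^ 2 + 1)).
    { replace (S (2 * S m)) with (S (S (S (2 * m)))) by lia.
      unfold pp. rewrite rseq_rec. fold pp. rewrite IH1, IH2, cf_a_SS, cf_b_S.
      rewrite ?Dp_S. rewrite !S_INR, !mult_INR. simpl (INR 2). ring. }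
    split; [exact E1|].
    replace (S (S (2 * S m))) with (S (S (S (S (2 * m))))) by lia.
    unfold pp. rewrite rseq_rec. fold pp.
    rewrite cf_a_SS, cf_b_S.
    replace (pp (S (S (S (2 * m))))) with (pp (S (2 * S m))) by (f_equal; lia).
    rewrite E1, IH2.
    rewrite ?Dp_S. rewrite !S_INR, !mult_INR. simpl (INR 2). ring.
Qed.

Lemma qq_closed m :
  qq (S (2 * m)) = Ep m /\ qq (S (S (2 * m))) = Ep m * ((4 * INR m + 4) ^ 2 + 1).
Proof.
  induction m as [|m [IH1 IH2]].
  - simpl. unfold qq, rseq. simpl. split; [|]; unfold cf_a, cf_b; simpl; ring.
  - assert (E1 : qq (S (2 * S m)) = Ep (S m)).
    { replace (S (2 * S m)) with (S (S (S (2 * m)))) by lia.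
      unfold qq. rewrite rseq_rec. fold qq. rewrite IH1, IH2, cf_a_SS, cf_b_S.
      rewrite ?Ep_S. rewrite !S_INR, !mult_INR. simpl (INR 2). ring. }
    split; [exact E1|].
    replace (S (S (2 * S m))) with (S (S (S (S (2 * m))))) by lia.
    unfold qq. rewrite rseq_rec. fold qq.
    rewrite cf_a_SS, cf_b_S.
    replace (qq (S (S (S (2 * m))))) with (qq (S (2 * S m))) by (f_equal; lia).
    rewrite E1, IH2.
    rewrite ?Ep_S. rewrite !S_INR, !mult_INR. simpl (INR 2). ring.
Qed.

Lemma qq_pos n : 0 < qq (S n).
Proof.
  destruct (Nat.Even_or_Odd n) as [[m ->]|[m ->]].
  - rewrite (proj1 (qq_closed m)). apply Ep_pos.
  - replace (S (2 * m + 1)) with (S (S (2 * m))) by lia. rewrite (proj2 (qq_closed m)).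
    apply Rmult_lt_0_compat; [apply Ep_pos|]. pose proof (pow2_ge_0 (4 * INR m + 4)). lra.
Qed.

Lemma approx_pq n : cf_approx cf_a cf_b n = pp (S n) / qq (S n).
Proof.
  apply approx_formula.
  - reflexivity.
  - reflexivity.
  - reflexivity.
  - reflexivity.
  - intros; apply rseq_rec.
  - intros; apply rseq_rec.
  - intros [|k]; [simpl; lra|]. rewrite cf_a_SS. apply Rmult_lt_0_compat; [lra| apply lt_0_INR; lia].
  - intros k. rewrite cf_b_S. apply pow_lt. pose proof (pos_INR (S k)). lra.
  - apply qq_pos.
  - intros [|k]. + unfold qq, rseq; simpl; lra.
    + rewrite cf_b_S. apply Rmult_le_pos; [apply pow_le; pose proof (pos_INR (S k)); lra|].
      left; apply qq_pos.
Qed.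


Lemma even_est M w : 0 <= M ->
  (M + /4) ^ 2 / (M + 3/4) <= w <= M + /4 ->
  Rabs (16 * ((4 * M + 2) ^ 2 + 1) * (w / (4 * M + 1) ^ 2) ^ 2 - 1) <= 4 / (M + 1).
Proof.
  intros HM [Hlo Hhi].
  assert (Hw0 : 0 <= w).
  { eapply Rle_trans; [|exact Hlo]. apply Rmult_le_pos; [apply pow2_ge_0|left; apply Rinv_0_lt_compat; lra]. }
  set (X := 16 * ((4 * M + 2) ^ 2 + 1) * (w / (4 * M + 1) ^ 2) ^ 2).
  assert (Hup : X <= ((4 * M + 2) ^ 2 + 1) / (4 * M + 1) ^ 2).
  { unfold X. replace (((4 * M + 2) ^ 2 + 1) / (4 * M + 1) ^ 2) with
      (16 * ((4 * M + 2) ^ 2 + 1) * ((M + /4) / (4 * M + 1) ^ 2) ^ 2) by (field; lra).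
    apply Rmult_le_compat_l. apply Rmult_le_pos; [lra| pose proof (pow2_ge_0 (4*M+2)); lra].
    apply pow_incr. split.
    - apply Rmult_le_pos; auto. left; apply Rinv_0_lt_compat; apply pow_lt; lra.
    - apply Rmult_le_compat_r; auto. left; apply Rinv_0_lt_compat; apply pow_lt; lra. }
  assert (Hlw : X >= ((4 * M + 2) ^ 2 + 1) / (4 * M + 3) ^ 2).
  { unfold X. replace (((4 * M + 2) ^ 2 + 1) / (4 * M + 3) ^ 2) with
      (16 * ((4 * M + 2) ^ 2 + 1) * (((M + /4) ^ 2 / (M + 3/4)) / (4 * M + 1) ^ 2) ^ 2) by (field; lra).
    apply Rle_ge. apply Rmult_le_compat_l. apply Rmult_le_pos; [lra| pose proof (pow2_ge_0 (4*M+2)); lra].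
    apply pow_incr. split.
    - apply Rmult_le_pos. apply Rmult_le_pos; [apply pow2_ge_0|left; apply Rinv_0_lt_compat; lra].
      left; apply Rinv_0_lt_compat; apply pow_lt; lra.
    - apply Rmult_le_compat_r; auto. left; apply Rinv_0_lt_compat; apply pow_lt; lra. }
  assert (H1 : ((4 * M + 2) ^ 2 + 1) / (4 * M + 1) ^ 2 <= 1 + 4 / (M + 1)).
  { apply Rmult_le_reg_r with ((4 * M + 1) ^ 2 * (M + 1)). apply Rmult_lt_0_compat; [apply pow_lt|]; lra.
    replace (((4 * M + 2) ^ 2 + 1) / (4 * M + 1) ^ 2 * ((4 * M + 1) ^ 2 * (M + 1))) with
      (((4 * M + 2) ^ 2 + 1) * (M + 1)) by (field; lra).
    replace ((1 + 4 / (M + 1)) * ((4 * M + 1) ^ 2 * (M + 1))) with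
      ((4 * M + 1) ^ 2 * (M + 1) + 4 * (4 * M + 1) ^ 2) by (field; lra).
    nra. }
  assert (H2 : 1 - 4 / (M + 1) <= ((4 * M + 2) ^ 2 + 1) / (4 * M + 3) ^ 2).
  { apply Rmult_le_reg_r with ((4 * M + 3) ^ 2 * (M + 1)). apply Rmult_lt_0_compat; [apply pow_lt|]; lra.
    replace (((4 * M + 2) ^ 2 + 1) / (4 * M + 3) ^ 2 * ((4 * M + 3) ^ 2 * (M + 1))) with
      (((4 * M + 2) ^ 2 + 1) * (M + 1)) by (field; lra).
    replace ((1 - 4 / (M + 1)) * ((4 * M + 3) ^ 2 * (M + 1))) with
      ((4 * M + 3) ^ 2 * (M + 1) - 4 * (4 * M + 3) ^ 2) by (field; lra).
    nra. }
  apply Rabs_le. lra.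
Qed.

Lemma odd_est J w : 1 <= J ->
  (J + /4) ^ 2 / (J + 3/4) <= w <= J + /4 ->
  Rabs (16 * w ^ 2 / ((4 * J) ^ 2 + 1) - 1) <= 1 / J.
Proof.
  intros HJ [Hlo Hhi].
  assert (Hw0 : 0 <= w).
  { eapply Rle_trans; [|exact Hlo]. apply Rmult_le_pos; [apply pow2_ge_0|left; apply Rinv_0_lt_compat; lra]. }
  assert (HD : 0 < (4 * J) ^ 2 + 1) by (pose proof (pow2_ge_0 (4 * J)); lra).
  set (X := 16 * w ^ 2 / ((4 * J) ^ 2 + 1)).
  assert (Hup : X <= 16 * (J + /4) ^ 2 / ((4 * J) ^ 2 + 1)).
  { unfold X. apply Rmult_le_compat_r. left; apply Rinv_0_lt_compat; lra.
    apply Rmult_le_compat_l; [lra|]. apply pow_incr; lra. }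
  assert (Hlw : 16 * ((J + /4) ^ 2 / (J + 3/4)) ^ 2 / ((4 * J) ^ 2 + 1) <= X).
  { unfold X. apply Rmult_le_compat_r. left; apply Rinv_0_lt_compat; lra.
    apply Rmult_le_compat_l; [lra|]. apply pow_incr. split; auto.
    apply Rmult_le_pos; [apply pow2_ge_0|left; apply Rinv_0_lt_compat; lra]. }
  assert (H1 : 16 * (J + /4) ^ 2 / ((4 * J) ^ 2 + 1) <= 1 + 1 / J).
  { apply Rmult_le_reg_r with (((4 * J) ^ 2 + 1) * J). apply Rmult_lt_0_compat; lra.
    replace (16 * (J + /4) ^ 2 / ((4 * J) ^ 2 + 1) * (((4 * J) ^ 2 + 1) * J)) with
      ((4 * J + 1) ^ 2 * J) by (field; lra).
    replace ((1 + 1 / J) * (((4 * J) ^ 2 + 1) * J)) with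
      (((4 * J) ^ 2 + 1) * J + ((4 * J) ^ 2 + 1)) by (field; lra).
    nra. }
  assert (H2 : 1 - 1 / J <= 16 * ((J + /4) ^ 2 / (J + 3/4)) ^ 2 / ((4 * J) ^ 2 + 1)).
  { apply Rmult_le_reg_r with (((4 * J) ^ 2 + 1) * (4 * J + 3) ^ 2 * J).
    apply Rmult_lt_0_compat; [apply Rmult_lt_0_compat; [lra|apply pow_lt; lra]|lra].
    replace (16 * ((J + /4) ^ 2 / (J + 3/4)) ^ 2 / ((4 * J) ^ 2 + 1) * (((4 * J) ^ 2 + 1) * (4 * J + 3) ^ 2 * J)) with
      ((4 * J + 1) ^ 4 * J) by (field; lra).
    replace ((1 - 1 / J) * (((4 * J) ^ 2 + 1) * (4 * J + 3) ^ 2 * J)) with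
      (((4 * J) ^ 2 + 1) * (4 * J + 3) ^ 2 * J - ((4 * J) ^ 2 + 1) * (4 * J + 3) ^ 2) by (field; lra).
    nra. }
  apply Rabs_le. lra.
Qed.


Lemma Dp_poch m : Dp m = (4 ^ m * poch (3/4) m) ^ 4.
Proof.
  induction m as [|m IH]; [simpl; ring|]. rewrite Dp_S, IH. simpl poch. simpl pow. field.
Qed.

Lemma Ep_poch m : Ep m = (4 ^ m * poch (/4) m * (4 * INR m + 1)) ^ 4.
Proof.
  induction m as [|m IH]; [simpl; field|]. rewrite Ep_S, IH. simpl poch. rewrite S_INR. simpl pow. field.
Qed.

Definition uu m := Gamma (INR m + 3/4) / Gamma (INR m + /4).

Lemma uu_pos m : 0 < uu m.
Proof.
  pose proof (pos_INR m). unfold uu.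
  destruct (Gamma_spec (INR m + /4)) as [G1 _]; [lra|].
  destruct (Gamma_spec (INR m + 3/4)) as [G3 _]; [lra|].
  apply Rdiv_lt_0_compat; auto.
Qed.

Lemma ww_bounds m : (INR m + /4) ^ 2 / (INR m + 3/4) <= uu m ^ 2 <= INR m + /4.
Proof.
  pose proof (pos_INR m) as Hm. pose proof (u_bounds m) as [Hl Hh]. fold (uu m) in Hl, Hh.
  pose proof (uu_pos m).
  assert (Hs : 0 < sqrt (INR m + 3/4)) by (apply sqrt_lt_R0; lra).
  split.
  - replace ((INR m + /4) ^ 2 / (INR m + 3/4)) with (((INR m + /4) / sqrt (INR m + 3/4)) ^ 2).
    + apply pow_incr. split; auto. apply Rdiv_le_0_compat; lra.
    + unfold Rdiv. rewrite Rpow_mult_distr, pow_inv. f_equal. f_equal.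
      rewrite <- Rsqr_pow2. apply Rsqr_sqrt. lra.
  - apply Rle_trans with (sqrt (INR m + /4) ^ 2).
    + apply pow_incr. split; auto. lra.
    + right. rewrite <- Rsqr_pow2. apply Rsqr_sqrt. lra.
Qed.

Lemma poch_ratio m : poch (3/4) m = rho * uu m * poch (/4) m.
Proof.
  pose proof (ratio_poch m) as E. fold (uu m) in E. pose proof (poch_pos (/4) m ltac:(lra)).
  replace (poch (3/4) m) with (poch (3/4) m / poch (/4) m * poch (/4) m) by (field; lra).
  rewrite E. reflexivity.
Qed.

Lemma rho_pos : 0 < rho.
Proof.
  unfold rho. destruct (Gamma_spec (/4)) as [G1 _]; [lra|].
  destruct (Gamma_spec (3/4)) as [G3 _]; [lra|]. apply Rdiv_lt_0_compat; auto.
Qed.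

Lemma approx_even m : cf_approx cf_a cf_b (2 * m) =
  rho ^ 4 * (16 * ((4 * INR m + 2) ^ 2 + 1) * (uu m ^ 2 / (4 * INR m + 1) ^ 2) ^ 2).
Proof.
  rewrite approx_pq, (proj1 (pp_closed m)), (proj1 (qq_closed m)).
  rewrite Dp_poch, Ep_poch, poch_ratio.
  pose proof (poch_pos (/4) m ltac:(lra)). pose proof (pos_INR m).
  assert (0 < 4 ^ m) by (apply pow_lt; lra).
  field. repeat split; lra.
Qed.

Lemma approx_odd m : cf_approx cf_a cf_b (2 * m + 1) =
  rho ^ 4 * (16 * uu (S m) ^ 2 ^ 2 / ((4 * INR (S m)) ^ 2 + 1)).
Proof.
  replace (2 * m + 1)%nat with (S (2 * m)) by lia.
  rewrite approx_pq, (proj2 (pp_closed m)), (proj2 (qq_closed m)).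
  rewrite Dp_poch, Ep_poch, poch_ratio. simpl poch. rewrite S_INR.
  pose proof (poch_pos (/4) m ltac:(lra)). pose proof (pos_INR m).
  assert (0 < 4 ^ m) by (apply pow_lt; lra).
  assert (0 < (4 * INR m + 4) ^ 2 + 1) by (pose proof (pow2_ge_0 (4 * INR m + 4)); lra).
  simpl pow. field. repeat split; lra.
Qed.

Lemma approx_bound n : Rabs (cf_approx cf_a cf_b n - rho ^ 4) <= 8 * rho ^ 4 / (INR n + 1).
Proof.
  pose proof rho_pos as Hr. assert (Hr4 : 0 < rho ^ 4) by (apply pow_lt; lra).
  destruct (Nat.Even_or_Odd n) as [[m ->]|[m ->]].
  - rewrite approx_even. pose proof (pos_INR m).
    pose proof (even_est (INR m) (uu m ^ 2) ltac:(lra) (ww_bounds m)) as Hest.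
    replace (rho ^ 4 * (16 * ((4 * INR m + 2) ^ 2 + 1) * (uu m ^ 2 / (4 * INR m + 1) ^ 2) ^ 2) - rho ^ 4)
      with (rho ^ 4 * (16 * ((4 * INR m + 2) ^ 2 + 1) * (uu m ^ 2 / (4 * INR m + 1) ^ 2) ^ 2 - 1)) by ring.
    rewrite Rabs_mult, (Rabs_pos_eq (rho ^ 4)) by lra.
    apply Rle_trans with (rho ^ 4 * (4 / (INR m + 1))).
    + apply Rmult_le_compat_l; lra.
    + rewrite mult_INR. replace (INR 2) with 2 by (simpl; ring).
      apply Rmult_le_reg_r with ((INR m + 1) * (2 * INR m + 1)). nra.
      replace (rho ^ 4 * (4 / (INR m + 1)) * ((INR m + 1) * (2 * INR m + 1))) with
        (rho ^ 4 * 4 * (2 * INR m + 1)) by (field; lra).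
      replace (8 * rho ^ 4 / (2 * INR m + 1) * ((INR m + 1) * (2 * INR m + 1))) with
        (8 * rho ^ 4 * (INR m + 1)) by (field; lra).
      replace (8 * rho ^ 4 * (INR m + 1)) with (rho ^ 4 * 4 * (2 * INR m + 2)) by ring.
      apply Rmult_le_compat_l; lra.
  - rewrite approx_odd. pose proof (pos_INR m).
    assert (HJ : 1 <= INR (S m)) by (rewrite S_INR; lra).
    pose proof (odd_est (INR (S m)) (uu (S m) ^ 2) HJ (ww_bounds (S m))) as Hest.
    replace (rho ^ 4 * (16 * uu (S m) ^ 2 ^ 2 / ((4 * INR (S m)) ^ 2 + 1)) - rho ^ 4)
      with (rho ^ 4 * (16 * (uu (S m) ^ 2) ^ 2 / ((4 * INR (S m)) ^ 2 + 1) - 1)).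
    2: { assert (E4 : uu (S m) ^ 2 ^ 2 = (uu (S m) ^ 2) ^ 2) by (rewrite <- pow_mult; reflexivity). rewrite E4. ring. }
    rewrite Rabs_mult, (Rabs_pos_eq (rho ^ 4)) by lra.
    apply Rle_trans with (rho ^ 4 * (1 / INR (S m))).
    + apply Rmult_le_compat_l; lra.
    + rewrite plus_INR, mult_INR, S_INR. replace (INR 2) with 2 by (simpl; ring). replace (INR 1) with 1 by reflexivity.
      apply Rmult_le_reg_r with ((INR m + 1) * (2 * INR m + 1 + 1)). nra.
      replace (rho ^ 4 * (1 / (INR m + 1)) * ((INR m + 1) * (2 * INR m + 1 + 1))) with
        (rho ^ 4 * (2 * INR m + 2)) by (field; lra).
      replace (8 * rho ^ 4 / (2 * INR m + 1 + 1) * ((INR m + 1) * (2 * INR m + 1 + 1))) with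
        (8 * rho ^ 4 * (INR m + 1)) by (field; lra).
      nra.
Qed.

Theorem mainTheorem2 :
  cf_converges_to cf_a cf_b ((Gamma (1/4) / Gamma (3/4)) ^ 4).
Proof.
  unfold cf_converges_to.
  replace (Gamma (1/4) / Gamma (3/4)) with rho by (unfold rho; f_equal; f_equal; field).
  apply is_lim_seq_spec. intros eps.
  pose proof rho_pos as Hr. assert (Hr4 : 0 < rho ^ 4) by (apply pow_lt; lra).
  destruct eps as [e He]; simpl.
  destruct (nat_above (8 * rho ^ 4 / e)) as [N HN].
  exists N. intros n Hn.
  apply Rle_lt_trans with (1 := approx_bound n).
  apply le_INR in Hn. pose proof (pos_INR n).
  apply Rmult_lt_reg_r with ((INR n + 1) / e). apply Rdiv_lt_0_compat; lra.
  replace (8 * rho ^ 4 / (INR n + 1) * ((INR n + 1) / e)) with (8 * rho ^ 4 / e) by (field; lra).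
  replace (e * ((INR n + 1) / e)) with (INR n + 1) by (field; lra).
  lra.
Qed.
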